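(* Let $n\ge 2$ and let $k_1,\dots,k_n$, $a_1,\dots,a_{n-1}$, $b_1,\dots,b_n$ be real or complex numbers ($3n-1$ parameters). Let $A_1$ be the $n\times n$ matrix with entries $$(A_1)_{ij}=\begin{cases} k_i b_j, & i\le j,\\ k_j a_j, & i>j.\end{cases}$$ Define $c_i=k_{i+1}b_i-k_ia_i$ for $i=1,\dots,n-1$, $c_0=1$, $c_n=b_n$; $d_i=k_{i+1}a_{i+1}b_i-k_ia_ib_{i+1}$ for $i=1,\dots,n-2$, $d_0=a_1$; $f_i=a_i-b_i$ for $i=2,\dots,n-1$; $g_i=k_{i+1}-k_i$ for $i=2,\dots,n-1$, $g_n=1$. Assume $k_1\neq 0$ and $c_i\neq 0$ for $i=1,\dots,n$. Then $A_1$ is invertible and its inverse $A_1^{-1}=[\alpha_{ij}]$ is the lower Hessenberg matrix with entries $$\alpha_{ij}=\begin{cases} \dfrac{k_{i+1}b_{i-1}-k_{i-1}a_{i-1}}{c_{i-1}c_i}, & i=j,\ i\neq 1,n,\\[2mm] \dfrac{k_2}{k_1c_1}, & i=j=1,\\[2mm] \dfrac{b_{n-1}}{c_{n-1}c_n}, & i=j=n,\\[2mm] (-1)^{i+j}\dfrac{d_{j-1}\,g_i\prod_{\nu=j+1}^{i-1}k_\nu f_\nu}{\prod_{\nu=j-1}^{i}c_\nu}, & i-j\ge 1,\\[2mm] -\dfrac{1}{c_i}, & j-i=1,\\[2mm] 0, & j-i>1, \end{cases}$$ where the empty product $\prod_{\nu=j+1}^{i-1}k_\nu f_\nu$ (case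 $i=j+1$) is taken to be $1$.
   Context: A lower Hessenberg matrix is a square matrix whose entries $(i,j)$ vanish whenever $j-i>1$. *)

(* Defs.v *)
From HB Require Import structures.
From mathcomp Require Import all_boot all_order all_algebra.
Set Implicit Arguments. Unset Strict Implicit. Unset Printing Implicit Defensive.
Import Order.TTheory GRing.Theory Num.Theory.
Local Open Scope ring_scope.

(* All parameter sequences k, a, b : nat -> R are indexed from 1 as in the
   paper (values at other indices are irrelevant). Matrix indices i : 'I_n
   correspond to the paper's index i+1. *)

Section Defs.
Variable R : numFieldType.
Variables (n : nat) (k a b : nat -> R).

Definition A1 : 'M[R]_n :=
  \matrix_(i < n, j < n)
    if (i <= j)%N then k i.+1 * b j.+1 else k j.+1 * a j.+1.

Definition cc (i : nat) : R :=
  if i == 0%N then 1 else if i == n then b n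
  else k i.+1 * b i - k i * a i.

Definition dd (i : nat) : R :=
  if i == 0%N then a 1%N
  else k i.+1 * a i.+1 * b i - k i * a i * b i.+1.

Definition ff (i : nat) : R := a i - b i.

Definition gg (i : nat) : R := if i == n then 1 else k i.+1 - k i.

Definition alpha (i j : nat) : R :=
  if i == j then
    (if i == 1%N then k 2%N / (k 1%N * cc 1%N)
     else if i == n then b n.-1 / (cc n.-1 * cc n)
     else (k i.+1 * b i.-1 - k i.-1 * a i.-1) / (cc i.-1 * cc i))
  else if (j < i)%N then
    (-1) ^+ (i + j) * dd j.-1 * gg i * (\prod_(j.+1 <= nu < i) (k nu * ff nu))
      / (\prod_(j.-1 <= nu < i.+1) cc nu)
  else if j == i.+1 then - (cc i)^-1
  else 0.

Definition alpha_mx : 'M[R]_n := \matrix_(i < n, j < n) alpha i.+1 j.+1.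

End Defs.

Definition lower_hessenberg (R : ringType) (n : nat) (M : 'M[R]_n) : Prop :=
  forall i j : 'I_n, (i.+1 < j)%N -> M i j = 0.

(* Main.v *)
Require Import Defs.
From HB Require Import structures.
From mathcomp Require Import all_boot all_order all_algebra.
From mathcomp Require Import ring zify.
Import Order.TTheory GRing.Theory Num.Theory.
Local Open Scope ring_scope.

Section Proof.
Variables (R : numFieldType) (n : nat) (k a b : nat -> R).
Hypothesis n2 : (2 <= n)%N.
Hypothesis k1 : k 1%N != 0.
Hypothesis ccnz : forall i : nat, (1 <= i <= n)%N -> cc n k a b i != 0.

Lemma cc_nz i : (i <= n)%N -> cc n k a b i != 0.
Proof.
case: i => [|i] Hi; first by rewrite /cc /= oner_neq0.
by apply: ccnz; lia.
Qed.

Lemma cc_mid i : (0 < i < n)%N -> cc n k a b i = k i.+1 * b i - k i * a i.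
Proof. move=> H; rewrite /cc ifF; last by apply/eqP; lia. rewrite ifF //; apply/eqP; lia. Qed.

Lemma cc_n : cc n k a b n = b n.
Proof. rewrite /cc ifF ?eqxx //; apply/eqP; lia. Qed.

Lemma cc_0 : cc n k a b 0 = 1.
Proof. by []. Qed.

Lemma dd_pos i : (0 < i)%N -> dd k a b i = k i.+1 * a i.+1 * b i - k i * a i * b i.+1.
Proof. by case: i. Qed.

Lemma gg_lt i : (i < n)%N -> gg n k i = k i.+1 - k i.
Proof. move=> H; rewrite /gg ifF //; apply/eqP; lia. Qed.

Definition P s t := \prod_(s <= nu < t) (k nu * ff a b nu).
Definition C s t := \prod_(s <= nu < t) cc n k a b nu.

Lemma C_nz s t : (t <= n.+1)%N -> C s t != 0.
Proof.
move=> Ht; rewrite /C prodf_seq_neq0; apply/allP => i; rewrite mem_index_iota => Hi /=.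
apply: cc_nz; lia.
Qed.

Lemma P_rec s t : (s <= t)%N -> P s t.+1 = P s t * (k t * ff a b t).
Proof. by move=> H; rewrite /P big_nat_recr. Qed.
Lemma C_rec s t : (s <= t)%N -> C s t.+1 = C s t * cc n k a b t.
Proof. by move=> H; rewrite /C big_nat_recr. Qed.
Lemma P_nil s : P s s = 1.
Proof. by rewrite /P big_geq. Qed.
Lemma C_nil s : C s s = 1.
Proof. by rewrite /C big_geq. Qed.

Variable j : nat.
Hypothesis j1 : (1 <= j)%N.
Hypothesis jn : (j <= n)%N.

Definition v l := alpha n k a b l j.
Definition B m := \sum_(m <= l < n.+1) b l * v l.
Definition Rr i := k i * B i + \sum_(1 <= l < i) k l * a l * v l.

Lemma v_gt l : (j < l)%N ->
  v l = (-1) ^+ (l + j) * dd k a b j.-1 * gg n k l * P j.+1 l / C j.-1 l.+1.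
Proof. move=> H; rewrite /v /alpha ifF; last by apply/eqP; lia. by rewrite H. Qed.

Lemma v_sup : (2 <= j)%N -> v j.-1 = - (cc n k a b j.-1)^-1.
Proof.
move=> H; rewrite /v /alpha ifF; last by apply/eqP; lia.
rewrite ifF; last by lia. rewrite ifT //; apply/eqP; lia.
Qed.

Lemma v_lt l : (l.+1 < j)%N -> v l = 0.
Proof.
move=> H; rewrite /v /alpha ifF; last by apply/eqP; lia.
rewrite ifF; last by lia. rewrite ifF //; apply/eqP; lia.
Qed.

Lemma v_diag1 : j = 1%N -> v j = k 2 / (k 1 * cc n k a b 1).
Proof. move=> Hj; rewrite /v /alpha Hj eqxx /=. done. Qed.

Lemma v_diagn : j = n -> v j = b n.-1 / (cc n k a b n.-1 * cc n k a b n).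
Proof. move=> Hj; rewrite /v /alpha Hj eqxx ifF; first by []. apply/eqP; lia. Qed.

Lemma v_diagm : (1 < j < n)%N -> v j =
  (k j.+1 * b j.-1 - k j.-1 * a j.-1) / (cc n k a b j.-1 * cc n k a b j).
Proof.
move=> H; rewrite /v /alpha eqxx ifF; last by apply/eqP; lia.
rewrite ifF //; apply/eqP; lia.
Qed.

Lemma Bstep m : (m <= n)%N -> B m = b m * v m + B m.+1.
Proof. by move=> H; rewrite /B big_ltn. Qed.

Lemma Bend : B n.+1 = 0.
Proof. by rewrite /B big_geq. Qed.

Lemma Rstep i : (1 <= i)%N -> (i < n)%N ->
  Rr i.+1 = Rr i + (k i.+1 - k i) * B i.+1 + k i * ff a b i * v i.
Proof.
move=> H1 H2; rewrite /Rr big_nat_recr //= (Bstep i); last lia.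
rewrite /ff; ring.
Qed.

Lemma B_closed m : (j < m)%N -> (m <= n)%N ->
  B m = (-1) ^+ (m + j) * dd k a b j.-1 * P j.+1 m / C j.-1 m.
Proof.
move=> H1 H2; move Et: (n - m)%N => t.
elim: t m H1 H2 Et => [|t IH] m H1 H2 Et.
  have Em : m = n by lia.
  subst m; rewrite Bstep // Bend v_gt // /gg eqxx C_rec; last lia.
  rewrite cc_n.
  have Hb : b n != 0 by rewrite -cc_n; apply: cc_nz.
  have HC : C j.-1 n != 0 by apply: C_nz; lia.
  by field; rewrite Hb HC.
rewrite Bstep; last lia.
rewrite (IH m.+1); try lia.
rewrite v_gt // gg_lt; last lia.
rewrite P_rec; last lia.
rewrite !C_rec; try lia.
have Hc : cc n k a b m != 0 by apply: cc_nz; lia.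
have HC : C j.-1 m != 0 by apply: C_nz; lia.
move: Hc; rewrite cc_mid; last lia. move=> Hc.
rewrite addSn exprS /ff.
by field; rewrite Hc HC.
Qed.
Lemma sign_odd m : (-1) ^+ (m.+1 + m) = -1 :> R.
Proof. by rewrite addSn exprS exprD -expr2 sqrr_sign mulr1. Qed.

Lemma B_jp1 : (j < n)%N ->
  B j.+1 = - dd k a b j.-1 / (cc n k a b j.-1 * cc n k a b j).
Proof.
move=> H; rewrite B_closed; try lia.
rewrite sign_odd P_nil C_rec; last lia.
have -> : C j.-1 j = cc n k a b j.-1.
  by rewrite -[in C _ j](prednK j1) /C big_nat1.
by rewrite mulr1 mulN1r.
Qed.

Lemma B_jm1 : (2 <= j)%N -> B j.-1 = 0.
Proof.
move=> H.
rewrite Bstep; last lia. rewrite prednK; last lia.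
rewrite Bstep // v_sup //.
have Hc1 : cc n k a b j.-1 != 0 by apply: cc_nz; lia.
have Hc2 : cc n k a b j != 0 by apply: cc_nz; lia.
case: (ltnP j n) => Hjn.
  rewrite B_jp1 // v_diagm; last lia.
  rewrite dd_pos; last lia.
  rewrite cc_mid in Hc2; last lia.
  rewrite cc_mid in Hc1; last lia.
  rewrite cc_mid; last lia.
  rewrite cc_mid; last lia.
  rewrite prednK in Hc1 *; last lia.
  by field; rewrite Hc1 Hc2.
have Ejn : j = n by lia.
rewrite v_diagn // Ejn Bend.
rewrite Ejn in Hc1 Hc2.
rewrite cc_n in Hc2 *.
by field; rewrite Hc1 Hc2.
Qed.

Lemma B_zero l : (1 <= l)%N -> (l <= j.-1)%N -> B l = 0.
Proof.
move=> H1 H2; move Et: (j.-1 - l)%N => t.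
elim: t l H1 H2 Et => [|t IH] l H1 H2 Et.
  have -> : l = j.-1 by lia.
  apply: B_jm1; lia.
rewrite Bstep; last lia.
rewrite v_lt; last lia.
rewrite mulr0 add0r; apply: IH; lia.
Qed.
Lemma R_main i : (1 <= i)%N -> (i <= n)%N -> Rr i = (i == j)%:R.
Proof.
elim: i => [//|i IH] H1 H2.
case: (posnP i) => Hi0.
  subst i; rewrite /Rr big_geq // addr0.
  case: (eqVneq j 1%N) => Ej.
    rewrite Bstep; last lia.
    have -> : B 2 = B j.+1 by rewrite Ej.
    rewrite B_jp1; last lia.
    have -> : v 1 = v j by rewrite Ej.
    rewrite v_diag1 // Ej /dd /=.
    have Hc : cc n k a b 1 != 0 by apply: cc_nz; lia.
    rewrite cc_mid in Hc *; last lia.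
    rewrite cc_0 /=. by field; rewrite Hc k1.
  rewrite B_zero; try lia.
  by rewrite mulr0.
have IHi := IH ltac:(lia) ltac:(lia).
rewrite Rstep; try lia.
case: (ltngtP j i) => Hji.
- rewrite IHi; have -> : (i.+1 == j) = false by apply/eqP; lia.
  rewrite B_closed; try lia.
  rewrite v_gt // gg_lt; last lia.
  rewrite P_rec; last lia.
  have -> : (i == j) = false by apply/eqP; lia.
  rewrite addSn exprS /ff /=; ring.
- case: (eqVneq i.+1 j) => Eij.
  + rewrite IHi; have -> : (i == j) = false by apply/eqP; lia.
    rewrite ?Eij ?eqxx /=.
    have E : i = j.-1 by lia.
    rewrite E.
    have HB : B j = b j.-1 / cc n k a b j.-1.
      have := B_jm1 ltac:(lia).
      rewrite Bstep; last lia.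
      rewrite prednK; last lia.
      rewrite v_sup; last lia.
      move=> /eqP; rewrite addrC addr_eq0 => /eqP ->.
      by rewrite mulrN opprK.
    rewrite HB v_sup; last lia.
    have Hc : cc n k a b j.-1 != 0 by apply: cc_nz; lia.
    rewrite cc_mid in Hc *; last lia.
    rewrite prednK in Hc *; last lia.
    by rewrite /ff /=; field; rewrite Hc.
  + rewrite IHi; have -> : (i == j) = false by apply/eqP; lia.
    rewrite ?(negbTE Eij) /=.
    rewrite v_lt; last lia.
    rewrite B_zero; try lia.
    by rewrite !mulr0 !addr0.
- subst i. rewrite IHi eqxx; have -> : (j.+1 == j) = false by apply/eqP; lia.
  rewrite B_jp1; last lia.
  have Hc1 : cc n k a b j.-1 != 0 by apply: cc_nz; lia.
  have Hc2 : cc n k a b j != 0 by apply: cc_nz; lia.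
  case: (eqVneq j 1%N) => Ej.
    rewrite v_diag1 // Ej /dd /= cc_0.
    rewrite Ej cc_mid in Hc2 *; last lia.
    by rewrite /ff /=; field; rewrite Hc2 k1.
  rewrite v_diagm; last lia.
  rewrite dd_pos; last lia.
  rewrite cc_mid in Hc2; last lia.
  rewrite cc_mid in Hc1; last lia.
  rewrite cc_mid; last lia.
  rewrite cc_mid; last lia.
  rewrite prednK in Hc1 *; last lia.
  by rewrite /ff /=; field; rewrite Hc1 Hc2.
Qed.
Lemma sum_eq i : (i < n)%N ->
  \sum_(l < n) (if (i <= l)%N then k i.+1 * b l.+1 else k l.+1 * a l.+1) * alpha n k a b l.+1 j
  = Rr i.+1.
Proof.
move=> Hi.
rewrite -(big_mkord xpredT (fun l => (if (i <= l)%N then k i.+1 * b l.+1 else k l.+1 * a l.+1) * alpha n k a b l.+1 j)).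
rewrite (big_cat_nat _ (n:=i)) //=; last lia.
rewrite /Rr /B big_add1 big_add1 /= addrC big_distrr /=.
congr (_ + _).
  apply: eq_big_nat => l Hl; rewrite ifT; last lia. by rewrite /v mulrA.
apply: eq_big_nat => l Hl; rewrite ifF; last lia. by rewrite /v.
Qed.
End Proof.

Theorem mainTheorem1 (R : numFieldType) (n : nat) (k a b : nat -> R) :
  (2 <= n)%N ->
  k 1%N != 0 ->
  (forall i : nat, (1 <= i <= n)%N -> cc n k a b i != 0) ->
  [/\ A1 n k a b \in unitmx,
      lower_hessenberg (invmx (A1 n k a b)) &
      invmx (A1 n k a b) = alpha_mx n k a b].
Proof.
move=> n2 k1 ccnz.
have Hmul : A1 n k a b *m alpha_mx n k a b = 1%:M.
  apply/matrixP => i j; rewrite !mxE.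
  under eq_bigr do rewrite !mxE.
  have Hj1 : (0 < j.+1)%N by [].
  have Hjn : (j.+1 <= n)%N by apply: ltn_ord.
  rewrite (sum_eq _ _ _ _ _ n2 k1 _ Hj1 Hjn _ (ltn_ord i)).
  rewrite (R_main _ _ _ _ _ n2 k1 ccnz _ Hj1 Hjn) //.
have [Hu _] := mulmx1_unit Hmul.
have Hinv : invmx (A1 n k a b) = alpha_mx n k a b.
  by rewrite -[RHS]mul1mx -(mulVmx Hu) -mulmxA Hmul mulmx1.
split => //; rewrite Hinv // => i j Hij.
rewrite mxE /alpha ifF; last by apply/eqP; lia.
rewrite ifF; last by lia.
rewrite ifF //; apply/eqP; lia.
Qed.
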